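(* Assume (H1)–(H5) and $\mathbb A_n=\mathbb T_n$. Then $\lim_{n\to\infty}\mathbb E[R_0(n)^2]=0$.
   Context: Let $d\ge1$, $S=\mathbb R^d$ with Borel $\sigma$-field. Binary tree: $\mathbb G_0=\mathbb T_0=\{\emptyset\}$, $\mathbb G_k=\{0,1\}^k$ (so $|\mathbb G_k|=2^k$), $\mathbb T_k=\bigcup_{r\le k}\mathbb G_r$, $\mathbb T=\bigcup_{r\ge0}\mathbb G_r$; $ij$ is the concatenation of words $i,j$ and $iA=\{ij:j\in A\}$. Given a probability kernel $\mathcal P$ from $S$ to $S^2$, for $g:S^3\to\mathbb R$ set $\mathcal Pg(y)=\int g(y,y_0,y_1)\mathcal P(y,dy_0,dy_1)$ and for $h:S^2\to\mathbb R$ set $\mathcal Ph(y)=\int h(y_0,y_1)\mathcal P(y,dy_0,dy_1)$. A bifurcating Markov chain (BMC) with initial law $\nu$ and kernel $\mathcal P$ is a process $X=(X_i)_{i\in\mathbb T}$ with values in $S$ such that $X_\emptyset\sim\nu$ and for all $k\ge0$ and bounded measurable $g_i:S^3\to\mathbb R$, $\mathbb E[\prod_{i\in\mathbb G_k}g_i(X_i,X_{i0},X_{i1})\mid\sigma(X_j;j\in\mathbb T_k)]=\prod_{i\in\mathbb G_k}\mathcal Pg_i(X_i)$. Let $P_0(y,A)=\mathcal P(y,A\times S)$, $P_1(y,A)=\mathcal P(y,S\times A)$, $\mathcal Q=\frac12(P_0+P_1)$, $\mathcal Q^n$ its $n$-th iterate, $\langle\lambda,f\rangle=\int f\,d\lambda$.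 For finite $A\subset\mathbb T$ and $f:S^3\to\mathbb R$, $M_A(f)=\sum_{u\in A}f(X_u,X_{u0},X_{u1})$. $X$ is a BMC with kernel $\mathcal P$ and initial law $\nu$ satisfying: (H1) There is a set $F$ of real measurable functions on $S$ which is a vector space containing the constants, with $f^2\in F$ for $f\in F$, $F\subset L^1(\nu)$, and for $f_0,f_1\in F$, $f_0\otimes f_1$ is $\mathcal P(y,\cdot)$-integrable for every $y$ and $\mathcal P(f_0\otimes f_1)\in F$. (H2) There is a probability measure $\mu$ on $S$ with $F\subset L^1(\mu)$ such that for every $f\in F$, $\mathcal Q^nf\to\langle\mu,f\rangle$ pointwise and there is $g\in F$ with $|\mathcal Q^nf|\le g$ for all $n$; moreover there exist $V\in F$ with $V\ge1$, $\alpha\in(0,1)$ and $M<\infty$ such that $|\mathcal Q^nf-\langle\mu,f\rangle|\le M\alpha^nV$ for all $n\in\mathbb N$ and all measurable $f$ with $|f|\le V$. (H3) $\mathcal P(y,dy_0,dy_1)$ has a Lebesgue density $\mathcal P(y,y_0,y_1)$; then $\mathcal Q$ has density $\mathcal Q(y,z)=\frac12\int(\mathcal P(y,z,w)+\mathcal P(y,w,z))dw$, $\mu$ has a Lebesgue density denoted $\mu(\cdot)$, and $\mu^{\triangle}(y,y_0,y_1)=\mu(y)\mathcal P(y,y_0,y_1)$. (H4) $C_0=\sup_{y,y_0,y_1\in S}(\mu(y)+\mathcal Q(y,y_0)+\mathcal P(y,y_0,y_1))<\infty$. (H5) $h_n=2^{-n\gamma}$ for some $\gamma\in(0,1/(3d))$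 with $2\alpha^2<2^{3d\gamma}$; $K_0:\mathbb R^d\to\mathbb R$ is bounded, integrable (hence square integrable) with $\int K_0=1$. Let $K=K_0\otimes K_0\otimes K_0$ on $\mathbb R^{3d}$. Fix $(x,x_0,x_1)\in S^3$ with $\mu(x)>0$. Define $f_n(y,y_0,y_1)=h_n^{-3d/2}K(h_n^{-1}(x-y),h_n^{-1}(x_0-y_0),h_n^{-1}(x_1-y_1))$ and $\tilde f_n=f_n-\langle\mu,\mathcal Pf_n\rangle$. Let $(p_n)$ be a non-decreasing sequence of positive integers with $p_n<n$, $p_n/n\to1$, and $n-p_n-\lambda\log n\to+\infty$ for every $\lambda>0$; write $p=p_n$. Define $R_0(n)=|\mathbb G_n|^{-1/2}\sum_{k=0}^{n-p-1}M_{\mathbb G_k}(\tilde f_n)$. *)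

(* Defs.v *)
From HB Require Import structures.
From mathcomp Require Import all_boot all_order all_algebra.
From mathcomp Require Import all_classical all_reals all_analysis.
Set Implicit Arguments. Unset Strict Implicit. Unset Printing Implicit Defensive.
Import Order.TTheory GRing.Theory Num.Theory.
Import numFieldNormedType.Exports.
Local Open Scope classical_set_scope.
Local Open Scope ring_scope.

(* State space S = R^d is represented by d.-tuple R, with the library's
   product (= Borel) sigma-algebra on tuples. *)

(* Used only for
   nonnegative measurable integrands, where (Tonelli) it is the Lebesgue
   integral on R^n. *)
Fixpoint ileb (R : realType) (n : nat) : (n.-tuple R -> \bar R) -> \bar R :=
  match n return (n.-tuple R -> \bar R) -> \bar R with
  | 0 => fun f => f [tuple]
  | n'.+1 => fun f =>
      (\int[@lebesgue_measure R]_x ileb (fun t : n'.-tuple R => f (cons_tuple x t)))%E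
  end.

Definition ileb2 (R : realType) (d : nat) (f : d.-tuple R -> d.-tuple R -> \bar R) : \bar R :=
  ileb (fun y0 => ileb (fun y1 => f y0 y1)).

(* Binary tree: a node is a word in {0,1}^* (false = 0, true = 1);
   the children of u are u0 = rcons u false and u1 = rcons u true.
   G_k = {0,1}^k is enumerated as k.-tuple bool. *)

Definition Tgen d0 (Om : measurableType d0) dS (S : measurableType dS)
  (X : seq bool -> Om -> S) (k : nat) : set (set Om) :=
  [set B | exists j : seq bool, (size j <= k)%N /\
           exists C : set S, measurable C /\ B = X j @^-1` C].

Definition Pcal (R : realType) dS (S : measurableType dS)
  (P : R.-pker S ~> (S * S)%type) (g : S * (S * S) -> R) (y : S) : R :=
  Rintegral (P y) setT (fun z => g (y, z)).

Definition Pcal2 (R : realType) dS (S : measurableType dS)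
  (P : R.-pker S ~> (S * S)%type) (h : S * S -> R) (y : S) : R :=
  Rintegral (P y) setT h.

Definition is_BMC (R : realType) d0 (Om : measurableType d0) (Pr : probability Om R)
  dS (S : measurableType dS) (X : seq bool -> Om -> S) (nu : probability S R)
  (P : R.-pker S ~> (S * S)%type) : Prop :=
  (forall u, measurable_fun setT (X u)) /\
  (forall A, measurable A -> Pr (X [::] @^-1` A) = nu A) /\
  (forall (k : nat) (g : k.-tuple bool -> S * (S * S) -> R),
     (forall i, measurable_fun setT (g i)) ->
     (forall i, exists c : R, forall z, `|g i z| <= c) ->
     forall A : set Om, <<s Tgen X k >> A ->
     (\int[Pr]_w ((\1_A w) *
        \prod_(i : k.-tuple bool) g i (X i w, (X (rcons i false) w, X (rcons i true) w)))%:E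
      = \int[Pr]_w ((\1_A w) * \prod_(i : k.-tuple bool) Pcal P (g i) (X i w))%:E)%E).

Definition Qop (R : realType) dS (S : measurableType dS)
  (P : R.-pker S ~> (S * S)%type) (f : S -> R) (y : S) : R :=
  (Rintegral (P y) setT (fun z => f z.1) + Rintegral (P y) setT (fun z => f z.2)) / 2.

Definition Qn (R : realType) dS (S : measurableType dS)
  (P : R.-pker S ~> (S * S)%type) (n : nat) (f : S -> R) : S -> R :=
  iter n (Qop P) f.

Definition pairing (R : realType) dS (S : measurableType dS)
  (lam : {measure set S -> \bar R}) (f : S -> R) : R := Rintegral lam setT f.

Definition MG (R : realType) d0 (Om : measurableType d0) dS (S : measurableType dS)
  (X : seq bool -> Om -> S) (k : nat) (f : S * (S * S) -> R) (w : Om) : R :=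
  \sum_(u : k.-tuple bool) f (X u w, (X (rcons u false) w, X (rcons u true) w)).

Definition kscale (R : realType) (d : nat) (h : R) (a b : d.-tuple R) : d.-tuple R :=
  [tuple (tnth a i - tnth b i) / h | i < d].

Definition hn (R : realType) (gamma : R) (n : nat) : R := 2 `^ (- (n%:R * gamma)).

Definition fn (R : realType) (d : nat) (K0 : d.-tuple R -> R) (gamma : R)
  (x x0 x1 : d.-tuple R) (n : nat) (z : d.-tuple R * (d.-tuple R * d.-tuple R)) : R :=
  hn gamma n `^ (- ((3 * d)%:R / 2)) *
  (K0 (kscale (hn gamma n) x z.1) * K0 (kscale (hn gamma n) x0 z.2.1)
   * K0 (kscale (hn gamma n) x1 z.2.2)).

Definition ftilde (R : realType) (d : nat) (P : R.-pker (d.-tuple R) ~> (d.-tuple R * d.-tuple R)%type)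
  (mu : probability (d.-tuple R) R) (K0 : d.-tuple R -> R) (gamma : R)
  (x x0 x1 : d.-tuple R) (n : nat) (z : d.-tuple R * (d.-tuple R * d.-tuple R)) : R :=
  fn K0 gamma x x0 x1 n z - pairing mu (Pcal P (fn K0 gamma x x0 x1 n)).

Definition R0 (R : realType) d0 (Om : measurableType d0) (d : nat)
  (X : seq bool -> Om -> d.-tuple R)
  (P : R.-pker (d.-tuple R) ~> (d.-tuple R * d.-tuple R)%type)
  (mu : probability (d.-tuple R) R) (K0 : d.-tuple R -> R) (gamma : R)
  (x x0 x1 : d.-tuple R) (p : nat -> nat) (n : nat) (w : Om) : R :=
  ((2 ^ n)%:R `^ (- (2^-1))) *
  \sum_(0 <= k < n - p n) MG X k (ftilde P mu K0 gamma x x0 x1 n) w.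

(* Main.v *)
Require Import Defs.
From HB Require Import structures.
From mathcomp Require Import all_boot all_order all_algebra.
From mathcomp Require Import all_classical all_reals all_analysis.
From mathcomp Require Import ring lra zify.
Import Order.TTheory GRing.Theory Num.Theory.
Import numFieldNormedType.Exports.
Local Open Scope classical_set_scope.
Local Open Scope ring_scope.

Section S1.
Local Open Scope ereal_scope.
Lemma int_le_cst (R : realType) d (T : measurableType d)
  (mu : {measure set T -> \bar R}) (f : T -> \bar R) (b : R) :
  (0 <= b)%R -> (forall x, (0 <= f x)%E) -> (forall x, (f x <= b%:E)%E) ->
  (\int[mu]_(x in setT) f x <= b%:E * mu setT)%E.
Proof.
move=> b0 f0 fb.
rewrite -(integral_cst mu measurableT b%:E).
rewrite /integral !patch_setT.
have -> : f^\- = cst 0%E by apply/funext => x; rewrite (ge0_funenegE (D:=setT))// inE.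
have -> : (cst b%:E)^\- = (cst 0%E : T -> \bar R).
  by apply/funext => x; rewrite (ge0_funenegE (D:=setT))// ?inE// => y _; rewrite lee_fin.
apply: leeB => //; apply: ereal_sup_le => _ [h hf <-]; exists h => //= x.
apply: (le_trans (hf x)); rewrite (ge0_funeposE (D:=setT))// ?inE//.
by rewrite (ge0_funeposE (D:=setT))// ?inE// => y _; rewrite lee_fin.
Qed.
Lemma int_le_cst0 (R : realType) d (T : measurableType d)
  (mu : {measure set T -> \bar R}) (f : T -> \bar R) (b : R) :
  mu setT = 1 -> (0 <= b)%R -> (forall x, (0 <= f x)%E) -> (forall x, (f x <= b%:E)%E) ->
  (\int[mu]_(x in setT) f x <= b%:E)%E.
Proof.
by move=> m1 b0 f0 fb; have := @int_le_cst R d T mu f b b0 f0 fb; rewrite m1 mule1.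
Qed.

Lemma int_le_cst1 (R : realType) d (T : measurableType d)
  (mu : probability T R) (f : T -> \bar R) (b : R) :
  (0 <= b)%R -> (forall x, (0 <= f x)%E) -> (forall x, (f x <= b%:E)%E) ->
  (\int[mu]_(x in setT) f x <= b%:E)%E.
Proof.
move=> b0 f0 fb; apply: int_le_cst0 => //; exact: probability_setT.
Qed.
End S1.

Lemma Rint_bound (R : realType) d (T : measurableType d)
  (mu : {measure set T -> \bar R}) (g : T -> R) (C : R) :
  mu setT = 1%E -> (forall x, `|g x| <= C) -> `|Rintegral mu setT g| <= C.
Proof.
move=> m1 gC.
have C0 : forall x : T, 0 <= C by move=> x; exact: le_trans (gC x).
rewrite /Rintegral integralE.
set a := (\int[mu]_(x in _) _)%E; set b := (\int[mu]_(x in _) _)%E.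
have Hp : forall h : T -> \bar R, (forall x, 0 <= h x)%E -> (forall x, h x <= `|g x|%:E)%E ->
   (0 <= \int[mu]_(x in setT) h x <= C%:E)%E.
  move=> h h0 hg; apply/andP; split; first exact: integral_ge0.
  have [x0 _] : exists x : T, True.
    apply: contrapT => nT.
    have e : [set: T] = set0 by rewrite predeqE => x; split => // _; apply: nT; exists x.
    move: m1; rewrite e measure0 => -[] /eqP; by rewrite eq_sym oner_eq0.
  have := @int_le_cst R d T mu h C (C0 x0) h0 (fun x => le_trans (hg x) (gC x : (`|g x|%:E <= C%:E)%E)).
  by rewrite m1 mule1.
have /andP[a0 aC] := Hp ((fun x => (g x)%:E)^\+)%E (fun x => funepos_ge0 _ x)
  (fun x => ltac:(rewrite funeposE ge_max !lee_fin ler_norm normr_ge0//)).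
have /andP[b0 bC] := Hp ((fun x => (g x)%:E)^\-)%E (fun x => funeneg_ge0 _ x)
  (fun x => ltac:(rewrite funenegE ge_max !lee_fin normr_ge0 andbT -normrN ler_norm//)).
rewrite -/a -/b.
have aF : a = (fine a)%:E by rewrite fineK// ge0_fin_numE// (le_lt_trans aC) ?ltry.
have bF : b = (fine b)%:E by rewrite fineK// ge0_fin_numE// (le_lt_trans bC) ?ltry.
have a0' : 0 <= fine a := fine_ge0 a0.
have b0' : 0 <= fine b := fine_ge0 b0.
have aC' : fine a <= C by rewrite -lee_fin -aF.
have bC' : fine b <= C by rewrite -lee_fin -bF.
rewrite aF bF -EFinB /= ler_norml.
move: a0' b0' aC' bC'; move: (fine a) (fine b) => u v.
clear -C; move=> *; apply/andP; split; lra.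
Qed.

Lemma sum_pow2_le (N : nat) : (\sum_(0 <= k < N) 2 ^ k <= 2 ^ N)%N.
Proof.
elim: N => [|N IH]; first by rewrite big_geq.
rewrite big_nat_recr //= expnS; lia.
Qed.

Lemma MG_bound (R : realType) d0 (Om : measurableType d0) dS (S : measurableType dS)
  (X : seq bool -> Om -> S) (k : nat) (f : S * (S * S) -> R) (w : Om) (T : R) :
  (forall z, `|f z| <= T) -> `|MG X k f w| <= (2 ^ k)%:R * T.
Proof.
move=> fT; rewrite /MG (le_trans (ler_norm_sum _ _ _))//.
rewrite (le_trans (ler_sum _ (fun i _ => fT _)))//.
by rewrite sumr_const card_tuple card_bool mulr_natl.
Qed.

Lemma sumMG_bound (R : realType) (F : nat -> R) (N : nat) (T : R) :
  0 <= T -> (forall k, `|F k| <= (2 ^ k)%:R * T) ->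
  `|\sum_(0 <= k < N) F k| <= (2 ^ N)%:R * T.
Proof.
move=> T0 FT; rewrite (le_trans (ler_norm_sum _ _ _))//.
rewrite (le_trans (ler_sum _ (fun i _ => FT i)))//.
rewrite -mulr_suml -natr_sum ler_wpM2r// ler_nat; exact: sum_pow2_le.
Qed.

Lemma fn_bound (R : realType) (d : nat) (K0 : d.-tuple R -> R) (gamma : R)
  (x x0 x1 : d.-tuple R) (n : nat) (c : R) :
  (forall u, `|K0 u| <= c) -> forall z,
  `|fn K0 gamma x x0 x1 n z| <= hn gamma n `^ (- ((3 * d)%:R / 2)) * c ^+ 3.
Proof.
move=> Kc z; rewrite /fn normrM ger0_norm ?powR_ge0// ler_wpM2l ?powR_ge0//.
rewrite !normrM -mulrA exprS expr2.
by rewrite ler_pM ?mulr_ge0 ?ler_pM.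
Qed.

Lemma ftilde_bound (R : realType) (d : nat)
  (P : R.-pker (d.-tuple R) ~> (d.-tuple R * d.-tuple R)%type)
  (mu : probability (d.-tuple R) R) (K0 : d.-tuple R -> R) (gamma : R)
  (x x0 x1 : d.-tuple R) (n : nat) (c : R) :
  (forall u, `|K0 u| <= c) -> forall z,
  `|ftilde P mu K0 gamma x x0 x1 n z| <=
     2 * (hn gamma n `^ (- ((3 * d)%:R / 2)) * c ^+ 3).
Proof.
move=> Kc z; rewrite /ftilde (le_trans (ler_normB _ _))// mulr_natl mulr2n.
apply: lerD; first exact: fn_bound.
apply: Rint_bound; first exact: probability_setT.
move=> y; apply: Rint_bound; first exact: prob_kernel.
move=> w; exact: fn_bound.
Qed.

Lemma u_cvg (R : realType) (d : nat) (gamma : R) (p : nat -> nat) :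
  (1 <= d)%N -> 0 < gamma < ((3 * d)%:R)^-1 -> (forall n, (1 < n)%N -> (p n < n)%N) ->
  (fun n => (p n)%:R / n%:R : R) @ \oo --> (1 : R) ->
  (fun n => (2 ^ n)%:R `^ (- (2^-1)) * (2 ^ (n - p n))%:R
             * hn gamma n `^ (- ((3 * d)%:R / 2))) @ \oo --> (0 : R).
Proof.
move=> d1 /andP[g0 g1] pn pcv.
have d0 : (0 : R) < (3 * d)%:R by rewrite ltr0n; lia.
set a := (3 * d)%:R * gamma.
have a0 : 0 < a by rewrite mulr_gt0.
have a1 : a < 1.
  by move: g1; rewrite -(ltr_pM2l d0) mulfV ?lt0r_neq0.
set eps := (1 - a) / 4.
have eps0 : 0 < eps by rewrite /eps divr_gt0 // subr_gt0.
set r := (2 : R) `^ (- eps).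
have r0 : 0 <= r by exact: powR_ge0.
have r1 : r < 1.
  have two1 : (1:R) < 2 by lra.
  have two0 : (0:R) <= 2 by lra.
  rewrite lt_neqAle; apply/andP; split.
    rewrite /r powR_eq1 negb_or negb_or oppr_eq0 (gt_eqF two1) /=.
    by apply/andP; split; [rewrite -leNgt | exact: lt0r_neq0].
  rewrite /r -[leRHS](powRr0 2); apply: ler_powR; last by rewrite oppr_le0 ltW.
  exact: ltW.
have E n : (2 ^ n)%:R `^ (- (2^-1)) * (2 ^ (n - p n))%:R
             * hn gamma n `^ (- ((3 * d)%:R / 2)) =
          (2 : R) `^ (n%:R * (- (2^-1)) + (n - p n)%:R + (- (n%:R * gamma)) * (- ((3 * d)%:R / 2))).
  have t0 : (2:R) != 0 by lra.
  have t1 : (0:R) <= 2 by lra.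
  rewrite [RHS]powRD ?t0 ?implybT // powRD ?t0 ?implybT //.
  rewrite !powRrM !powR_mulrn // /hn.
  by rewrite !natrX.
have t1 : (1:R) <= 2 by lra.
apply: (@squeeze_cvgr _ _ _ _ (cst 0) (fun n => r ^+ n)); last 2 first.
- exact: cvg_cst.
- by apply: cvg_expr; rewrite ger0_norm.
have Hp : \forall t \near \oo, `|1 - (p t)%:R / t%:R : R| < eps.
  by move/cvgrPdist_lt : pcv; apply.
near=> n.
have n1 : (1 < n)%N by near: n; exact: nbhs_infty_gt.
have hpn : `|1 - (p n)%:R / n%:R : R| < eps by near: n; exact: Hp.
rewrite E powR_ge0 /= /r -powR_mulrn ?powR_ge0 // -powRrM.
apply: ler_powR => //.
have nn0 : (0:R) < n%:R by rewrite ltr0n; lia.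
rewrite natrB; last by have := pn n n1; lia.
have hlt : n%:R - (p n)%:R < eps * n%:R.
  have -> : (n%:R : R) - (p n)%:R = (1 - (p n)%:R / n%:R) * n%:R.
    by rewrite mulrBl mul1r divfK // lt0r_neq0.
  rewrite ltr_pM2r //; by move: hpn; rewrite ltr_norml => /andP[].
have ha : a = 1 - 4 * eps.
  rewrite /eps mulrC divfK; last by lra.
  by rewrite opprB addrC subrK.
have -> : - (n%:R * gamma) * - ((3 * d)%:R / 2) = n%:R * a / 2 by rewrite /a mulrNN; ring.
rewrite ha.
nra.
Unshelve. all: by end_near.
Qed.

Theorem lemma6p1 (R : realType) (d : nat)
  (d0 : measure_display) (Om : measurableType d0) (Pr : probability Om R)
  (nu : probability (d.-tuple R) R)
  (P : R.-pker (d.-tuple R) ~> (d.-tuple R * d.-tuple R)%type)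
  (X : seq bool -> Om -> d.-tuple R)
  (F : set (d.-tuple R -> R)) (mu : probability (d.-tuple R) R)
  (V : d.-tuple R -> R) (alpha M : R)
  (pdens : d.-tuple R -> d.-tuple R -> d.-tuple R -> R) (mdens : d.-tuple R -> R)
  (gamma : R) (K0 : d.-tuple R -> R) (x x0 x1 : d.-tuple R) (p : nat -> nat) :
  (1 <= d)%N ->
  (* X is a BMC with initial law nu and kernel P *)
  is_BMC Pr X nu P ->
  (* (H1) *)
  (forall f, F f -> measurable_fun setT f) ->
  (forall c : R, F (fun=> c)) ->
  (forall f g, F f -> F g -> F (fun y => f y + g y)) ->
  (forall (a : R) f, F f -> F (fun y => a * f y)) ->
  (forall f, F f -> F (fun y => f y ^+ 2)) ->
  (forall f, F f -> nu.-integrable setT (EFin \o f)) ->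
  (forall f0 f1, F f0 -> F f1 -> forall y,
     (P y).-integrable setT (fun z => (f0 z.1 * f1 z.2)%:E)) ->
  (forall f0 f1, F f0 -> F f1 -> F (Pcal2 P (fun z => f0 z.1 * f1 z.2))) ->
  (* (H2) *)
  (forall f, F f -> mu.-integrable setT (EFin \o f)) ->
  (forall f, F f -> forall y, (fun n => Qn P n f y) @ \oo --> pairing mu f) ->
  (forall f, F f -> exists2 g, F g & forall n y, `|Qn P n f y| <= g y) ->
  F V -> (forall y, 1 <= V y) -> 0 < alpha < 1 ->
  (forall f : d.-tuple R -> R, measurable_fun setT f -> (forall y, `|f y| <= V y) ->
     forall n y, `|Qn P n f y - pairing mu f| <= M * alpha ^+ n * V y) ->
  (* (H3) *)
  measurable_fun setT
    (fun t : d.-tuple R * (d.-tuple R * d.-tuple R) => pdens t.1 t.2.1 t.2.2) ->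
  (forall y y0 y1, 0 <= pdens y y0 y1) ->
  (forall y A, measurable A ->
     P y A = ileb2 (fun y0 y1 => (\1_A (y0, y1) * pdens y y0 y1)%:E)) ->
  measurable_fun setT mdens -> (forall y, 0 <= mdens y) ->
  (forall A, measurable A -> mu A = ileb (fun y => (\1_A y * mdens y)%:E)) ->
  (* (H4) *)
  (exists C0 : R, forall y y0 y1,
     ((mdens y)%:E + (2^-1)%:E * ileb (fun w => (pdens y y0 w + pdens y w y0)%:E)
      + (pdens y y0 y1)%:E <= C0%:E)%E) ->
  (* (H5) *)
  0 < gamma < ((3 * d)%:R)^-1 ->
  2 * alpha ^+ 2 < 2 `^ ((3 * d)%:R * gamma) ->
  measurable_fun setT K0 ->
  (exists c : R, forall u, `|K0 u| <= c) ->
  (ileb (fun u => (`|K0 u|)%:E) < +oo)%E ->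
  (ileb (fun u => (Num.max (K0 u) 0)%:E) - ileb (fun u => (Num.max (- K0 u) 0)%:E) = 1)%E ->
  (* the fixed point *)
  0 < mdens x ->
  (* the sequence (p_n) *)
  {homo p : a b / (a <= b)%N} ->
  (forall n, (0 < p n)%N) ->
  (forall n, (1 < n)%N -> (p n < n)%N) ->
  (fun n => (p n)%:R / n%:R : R) @ \oo --> (1 : R) ->
  (forall lam : R, 0 < lam ->
     (fun n => n%:R - (p n)%:R - lam * ln (n%:R : R)) @ \oo --> +oo) ->
  (* conclusion: E[R_0(n)^2] -> 0 *)
  (fun n => (\int[Pr]_w ((R0 X P mu K0 gamma x x0 x1 p n w) ^+ 2)%:E)%E) @ \oo --> 0%E.
Proof.
move=> d1 _ _ _ _ _ _ _ _ _ _ _ _ _ _ _ _ _ _ _ _ _ _ _ gam _ _ [c Kc] _ _ _ _ _ pn pcv _.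
have c0 : 0 <= c := le_trans (normr_ge0 _) (Kc x).
set u := fun n => (2 ^ n)%:R `^ (- (2^-1)) * (2 ^ (n - p n))%:R
             * hn gamma n `^ (- ((3 * d)%:R / 2)).
have hu : u n @[n --> \oo] --> (0:R) := @u_cvg R d gamma p d1 gam pn pcv.
set v := fun n => 2 * c ^+ 3 * u n.
have u0 n : 0 <= u n by rewrite /u !mulr_ge0 ?powR_ge0.
have Rb n w : `|R0 X P mu K0 gamma x x0 x1 p n w| <= v n.
  rewrite /R0 normrM ger0_norm ?powR_ge0//.
  have -> : v n = (2 ^ n)%:R `^ (- (2^-1)) * ((2 ^ (n - p n))%:R *
            (2 * (hn gamma n `^ (- ((3 * d)%:R / 2)) * c ^+ 3))).
    by rewrite /v /u; ring.
  apply: ler_wpM2l; first exact: powR_ge0.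
  apply: sumMG_bound; first by rewrite !mulr_ge0 ?powR_ge0 ?exprn_ge0.
  move=> k; apply: MG_bound => z; exact: ftilde_bound.
have vv : (fun n => v n * v n) @ \oo --> (0:R).
  have vcv : v n @[n --> \oo] --> (0:R).
    have := cvgM (cvg_cst (2 * c ^+ 3)) hu; rewrite mulr0 => H; exact: H.
  have := cvgM vcv vcv; rewrite mulr0 => H; exact: H.
apply: (@squeeze_cvge _ _ _ _ (cst 0%E) _ (fun n => (v n * v n)%:E)).
- apply: nearW => n; apply/andP; split.
    by apply: integral_ge0 => w _; rewrite lee_fin sqr_ge0.
  have vn0 : 0 <= v n by rewrite /v /=; apply: mulr_ge0; [apply: mulr_ge0; [exact: ler0n|exact: exprn_ge0]|exact: u0].
  have R0sq w : (R0 X P mu K0 gamma x x0 x1 p n w) ^+ 2 <= v n * v n.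
    rewrite (le_trans (ler_norm _))// normrX expr2.
    by rewrite ler_pM ?Rb.
  apply: (@int_le_cst1 R d0 Om Pr _ (v n * v n) (mulr_ge0 vn0 vn0)).
  - by move=> w; rewrite lee_fin sqr_ge0.
  - by move=> w; rewrite lee_fin.
- exact: cvg_cst.
- apply: cvg_EFin; first exact: nearW.
  exact: vv.
Qed.
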